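(* Let $G^c$ be a vertex-coloured graph with $n$ vertices and $c$ colours whose minimum degree satisfies $\delta(G^c)>(n-1)-\sqrt{n-1}$. Then $\gamma^t(G^c)\le c+1$.
   Context: A vertex-coloured graph $G^c$ with colour set $\{1,\dots,c\}$ is a finite simple graph in which every vertex receives exactly one colour and every colour appears on at least one vertex. A dominating set is tropical if every colour appears on at least one of its vertices; $\gamma^t(G^c)$ is the minimum size of a tropical dominating set. *)

(* Defs.v *)
From mathcomp Require Import all_boot.
From Stdlib Require Import Reals.
Set Implicit Arguments. Unset Strict Implicit. Unset Printing Implicit Defensive.

Definition simple_graph (T : finType) (e : rel T) : Prop :=
  symmetric e /\ irreflexive e.

Definition deg (T : finType) (e : rel T) (v : T) : nat := #|[set u | e v u]|.

(* Vertex colouring with colour set {1..c} (here 'I_c): every colour is used. *)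
Definition vertex_colouring (T : finType) (c : nat) (col : T -> 'I_c) : Prop :=
  forall k : 'I_c, exists v : T, col v = k.

Definition dominating (T : finType) (e : rel T) (D : {set T}) : Prop :=
  forall v : T, v \in D \/ exists2 u, u \in D & e u v.

Definition tropical (T : finType) (c : nat) (col : T -> 'I_c) (D : {set T}) : Prop :=
  forall k : 'I_c, exists2 v, v \in D & col v = k.

Definition tropical_dominating (T : finType) (e : rel T) (c : nat)
  (col : T -> 'I_c) (D : {set T}) : Prop :=
  dominating e D /\ tropical col D.

(* Main.v *)
Require Import Defs.
From mathcomp Require Import all_boot.
From Stdlib Require Import Reals Lra Psatz.

Lemma card_bigcup_le (T I : finType) (A : {set I}) (F : I -> {set T}) :
  #|\bigcup_(x in A) F x| <= \sum_(x in A) #|F x|.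
Proof.
elim/big_rec2: _ => [|i X n _ H]; first by rewrite cards0.
apply: leq_trans (leq_of_leqif (leq_card_setU _ _)) _.
by rewrite leq_add2l.
Qed.

Lemma sq_bound (m d n : nat) : n = (1 + d + m)%N ->
  (INR n - 1 - sqrt (INR n - 1) < INR d)%R -> m * m < d + m.
Proof.
move=> -> H.
rewrite !plus_INR /= in H.
have Ht : (INR 1 + INR d + INR m - 1 = INR d + INR m)%R by simpl; ring.
rewrite Ht in H.
have H0d := pos_INR d; have H0m := pos_INR m.
have Hs := sqrt_sqrt (INR d + INR m) ltac:(lra).
have Hs0 := sqrt_pos (INR d + INR m).
have : (INR m * INR m < INR d + INR m)%R by nra.
rewrite -mult_INR -plus_INR => /INR_lt /ltP. done.
Qed.

Theorem mainTheorem8 (T : finType) (e : rel T) (c : nat) (col : T -> 'I_c) :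
  simple_graph e ->
  vertex_colouring col ->
  (forall v : T,
     (INR #|T| - 1 - sqrt (INR #|T| - 1) < INR (deg e v))%R) ->
  exists D : {set T}, tropical_dominating e col D /\ #|D| <= c.+1.
Proof.
move=> [esym eirr] Hcol Hdeg.
set S := [set v | [pick u | col u == col v] == Some v].
have HS : forall k : 'I_c, exists2 v, v \in S & col v = k.
  move=> k; have [v Hv] := Hcol k.
  case E: [pick u | col u == k] => [u|]; last first.
    by move: E; case: pickP => // H _; have := H v; rewrite Hv eqxx.
  have Hu : col u = k by move: E; case: pickP => // u' /eqP H [<-].
  by exists u => //; rewrite inE Hu E.
have Sinj : {in S &, injective col}.
  move=> u v; rewrite !inE => /eqP Hu /eqP Hv Huv.
  by move: Hu; rewrite Huv Hv => -[].
have cardS : #|S| <= c.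
  rewrite -(card_in_imset Sinj); apply: leq_trans (max_card _) _; by rewrite card_ord.
have [Tempty|[v0 _]] := set_0Vmem [set: T].
  exists set0; split; last by rewrite cards0.
  split; first by move=> v; have := in_setT v; rewrite Tempty inE.
  move=> k; have [v _] := Hcol k; have := in_setT v; by rewrite Tempty inE.
pose N' (x : T) := ~: (x |: [set y | e x y]).
have inN' : forall x y, (y \in N' x) = (y != x) && ~~ e x y.
  by move=> x y; rewrite !inE negb_or.
have cardN' : forall x, #|T| = (1 + deg e x + #|N' x|)%N.
  move=> x; rewrite -(cardsC (x |: [set y | e x y])) cardsU1 inE eirr /deg.
  by [] || (rewrite add1n; by []).
have sq : forall x, #|N' x| * #|N' x| < deg e x + #|N' x|.
  move=> x; exact: sq_bound (cardN' x) (Hdeg x).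
pose xm := [arg max_(x > v0) #|N' x|].
have Mmax : forall x, #|N' x| <= #|N' xm|.
  by rewrite /xm; case: arg_maxnP => // y _ H x; apply: H.
set M := #|N' xm|.
have [s0 s0S _] : exists2 s, s \in S & True.
  by have [s Hs _] := HS (col v0); exists s.
pose U := [set x | (x \notin S) && [forall u in S, ~~ e u x]].
have UN : U \subset N' s0.
  apply/subsetP => x; rewrite inE inN' => /andP [xS /forall_inP /(_ _ s0S) ->].
  by rewrite andbT; apply: contraNneq xS => ->.
pose B := \bigcup_(x in U) N' x.
have cardB : #|B| < #|T|.
  apply: (leq_ltn_trans (card_bigcup_le _ _ U N')).
  apply: (@leq_ltn_trans (#|U| * M)).
    by rewrite -sum_nat_const; apply: leq_sum => x _; apply: Mmax.
  apply: (@leq_ltn_trans (M * M)).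
    by rewrite leq_mul2r (leq_trans (subset_leq_card UN)) ?Mmax ?orbT.
  rewrite (cardN' xm); have := sq xm; rewrite -/M => H; by rewrite add1n addSn ltnS ltnW.
have [w wB] : exists w, w \notin B.
  apply/existsP; rewrite -negb_forall; apply/negP => /forallP Hf.
  suff : #|T| <= #|B| by rewrite leqNgt cardB.
  by apply: subset_leq_card; apply/subsetP => x _; apply: Hf.
exists (w |: S); split; last by rewrite cardsU1 (leq_add (leq_b1 _) cardS).
split; last first.
  by move=> k; have [v vS Hv] := HS k; exists v => //; rewrite inE vS orbT.
move=> v.
case vS: (v \in S); first by left; rewrite inE vS orbT.
case: (boolP [exists u in S, e u v]) => [/exists_inP [u uS Huv]|Hn].
  by right; exists u => //; rewrite inE uS orbT.
have vU : v \in U by rewrite inE vS /= -negb_exists_in.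
case vw: (v == w); first by left; rewrite in_setU1 vw.
right; exists w; first by rewrite in_setU1 eqxx.
apply/negPn/negP => Hwv; move/negP: wB; apply.
apply/bigcupP; exists v => //; rewrite inN' eq_sym vw /= esym; exact: Hwv.
Qed.
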